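(* Let $X$ be a $T_0$ topological space and $x,y\in X$. Then $x\ll_{\operatorname{Irr}} y$ if and only if for every net $(x_i)_{i\in I}$ in $X$ that $\operatorname{Irr}$-converges to $y$, there exists $k\in I$ such that $x_i\ge x$ for all $i\ge k$.
   Context: For a topological space $X$, a nonempty subset $E$ is irreducible if whenever $E\subseteq A_1\cup A_2$ with $A_1,A_2$ closed, $E\subseteq A_1$ or $E\subseteq A_2$. The specialisation order is $x\le y$ iff $x\in\operatorname{cl}(\{y\})$; $\uparrow x=\{z:z\ge x\}$; $\bigvee$ denotes supremum in this order. $\operatorname{Irr}^+(X)$ is the set of irreducible subsets whose supremum exists. $x\ll_{\operatorname{Irr}} y$ iff for every $E\in\operatorname{Irr}^+(X)$ with $\bigvee E\ge y$, $E\cap\uparrow x\ne\emptyset$. A net $(x_i)_{i\in I}$ is a map from a preorder $(I,\le)$ to $X$. A net $(x_i)_{i\in I}$ $\operatorname{Irr}$-converges to $y$ if there is $E\in\operatorname{Irr}^+(X)$ with $\bigvee E\ge y$ such that for each $e\in E$ there is $k(e)\in I$ with $x_i\ge e$ for all $i\ge k(e)$. *)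

(* Defs.v *)
From HB Require Import structures.
From mathcomp Require Import all_boot all_order.
From mathcomp Require Import all_classical topology.
Set Implicit Arguments. Unset Strict Implicit. Unset Printing Implicit Defensive.
Local Open Scope classical_set_scope.

Section IrrDefs.
Variable X : topologicalType.

Definition spec_le (x y : X) : Prop := closure [set y] x.

Definition irreducible (E : set X) : Prop :=
  E !=set0 /\
  forall A1 A2 : set X, closed A1 -> closed A2 ->
    E `<=` A1 `|` A2 -> E `<=` A1 \/ E `<=` A2.

Definition is_sup (E : set X) (s : X) : Prop :=
  (forall e, E e -> spec_le e s) /\
  (forall u, (forall e, E e -> spec_le e u) -> spec_le s u).

Definition irr_plus_above (E : set X) (y : X) : Prop :=
  irreducible E /\ exists s, is_sup E s /\ spec_le y s.

Definition way_below_irr (x y : X) : Prop :=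
  forall E : set X, irr_plus_above E y -> exists2 e, E e & spec_le x e.

Definition irr_converges (I : Type) (le : I -> I -> Prop) (net : I -> X) (y : X)
  : Prop :=
  exists E : set X, irr_plus_above E y /\
    forall e, E e -> exists k : I, forall i, le k i -> spec_le e (net i).

End IrrDefs.

(* Main.v *)
Require Import Defs.
From mathcomp Require Import all_boot all_order.
From mathcomp Require Import all_classical topology.
Local Open Scope classical_set_scope.

Lemma spec_le_refl (X : topologicalType) (a : X) : spec_le a a.
Proof. by apply: subset_closure. Qed.

Lemma spec_le_trans (X : topologicalType) (a b c : X) :
  spec_le a b -> spec_le b c -> spec_le a c.
Proof.
move=> hab hbc.
have h : closure [set b] `<=` closure [set c].
  rewrite [X in _ `<=` X](closure_id _).1; last exact: closed_closure.
  apply: closureS => z ->; exact: hbc.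
exact: h.
Qed.

Theorem proposition4p2 (X : topologicalType) (hT0 : kolmogorov_space X) (x y : X) :
  way_below_irr x y <->
  (forall (I : Type) (le : I -> I -> Prop),
      (forall i, le i i) -> (forall i j k, le i j -> le j k -> le i k) ->
      forall net : I -> X, irr_converges le net y ->
      exists k : I, forall i, le k i -> spec_le x (net i)).
Proof.
split.
- move=> hwb I le _ _ net [E [hE hk]].
  have [e Ee xe] := hwb E hE.
  have [k hk'] := hk e Ee.
  exists k => i ki; exact: spec_le_trans xe (hk' i ki).
- move=> H E hE.
  pose I := {e : X | E e}.
  have := H I (fun a b : I => spec_le (proj1_sig a) (proj1_sig b))
    (fun i => @spec_le_refl X _) (fun i j k => @spec_le_trans X _ _ _)
    (fun i : I => proj1_sig i).
  case.
    exists E; split => // e Ee.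
    by exists (exist _ e Ee) => i.
  move=> [k Ek] hk; exists k => //.
  exact: (hk (exist _ k Ek) (@spec_le_refl X _)).
Qed.
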